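(* Let $\Sigma$ be a signed graph and let $\mathrm{acyc}_\Sigma(k)$ be the number of acyclic orientations of $\Sigma$ with exactly $k$ sinks. Then $X_\Sigma\in\mathbb{Y}$ and $\phi(X_\Sigma)=\sum_{k\ge0}\mathrm{acyc}_\Sigma(k)t^k$.
   Context: A signed graph $\Sigma$ is a finite graph (loops and multiple edges allowed) with $\mathrm{sgn}:E(\Sigma)\to\{+,-\}$; write $e:uv$ if $e$ has endpoints $u,v$. A coloring $\kappa:V(\Sigma)\to\mathbb{Z}$ is proper if $\kappa(u)\ne\mathrm{sgn}(e)\kappa(v)$ for every edge $e:uv$; $X_\Sigma=\sum_{\kappa\text{ proper}}\prod_{v}x_{\kappa(v)}$ in variables $x_i$, $i\in\mathbb{Z}$. An orientation assigns to each half-edge (a loop has two) an arrow toward or away from the vertex, such that on a positive edge exactly one of the two arrows points toward its vertex and on a negative edge both point toward or both point away. A cycle is a closed walk in which, considering only the edges of the walk, every vertex of the walk has at least one arrow pointing into it and one pointing out of it; an orientation is acyclic if it has no cycle; a sink is a vertex all of whose incident arrows point toward it (an isolated vertex is a sink). A signed poset is an acyclic orientation $P$ of a signed graph. A proper coloring $\kappa$ preserves $P$ if for every edge $e$ and each endpoint $v$ of $e$, with $u$ the other endpoint ($u=v$ for a loop), the arrow of $P$ at the incidence of $e$ with $v$ points toward $v$ iff $\kappa(v)>\mathrm{sgn}(e)\kappa(u)$. $Y_P=\sum_\kappa\prod_v x_{\kappa(v)}$ over proper colorings preserving $P$; $\mathbb{Y}$ is the $\mathbb{Q}$-span of all $Y_P$.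 $\phi:\mathbb{Y}\to\mathbb{Q}[t]$ is the (unique) $\mathbb{Q}$-linear map with $\phi(Y_P)=t^{\mathrm{sink}(P)}$ for every signed poset $P$ (its existence is established in the paper). *)

(* Defs.v *)
From HB Require Import structures.
From mathcomp Require Import all_boot all_order all_algebra.
From mathcomp Require Import boolp.
Set Implicit Arguments. Unset Strict Implicit. Unset Printing Implicit Defensive.
Import Order.TTheory GRing.Theory Num.Theory.
Local Open Scope ring_scope.

(* A finite signed graph on vertex set 'I_nv with edge set 'I_ne.
   ends e = (a, b) are the two endpoints of e (unordered; a = b for a loop);
   the first/second components index the two half-edges (incidences) of e.
   sgn e = true means e is positive, false means negative. *)
Record sgraph := SGraph {
  nv : nat;
  ne : nat;
  ends : 'I_ne -> 'I_nv * 'I_nv;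
  sgn : 'I_ne -> bool }.
Arguments ends : clear implicits.
Arguments sgn : clear implicits.

Definition sgnz (G : sgraph) (e : 'I_(ne G)) : int := if sgn G e then 1 else -1.
Arguments sgnz : clear implicits.

Definition proper (G : sgraph) (k : 'I_(nv G) -> int) : bool :=
  [forall e : 'I_(ne G), k (ends G e).1 != sgnz G e * k (ends G e).2].

(* An orientation: for each edge e, (o e).1 (resp. (o e).2) is true iff the
   arrow at the incidence of e with (ends e).1 (resp. (ends e).2) points
   toward that vertex. *)
Definition ori (G : sgraph) := {ffun 'I_(ne G) -> bool * bool}.

Definition valid_ori (G : sgraph) (o : ori G) : bool :=
  [forall e : 'I_(ne G),
     if sgn G e then (o e).1 != (o e).2 else (o e).1 == (o e).2].

Definition into_at (G : sgraph) (o : ori G) (w : 'I_(nv G)) (e : 'I_(ne G)) : bool :=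
  (((ends G e).1 == w) && (o e).1) || (((ends G e).2 == w) && (o e).2).
Definition out_at (G : sgraph) (o : ori G) (w : 'I_(nv G)) (e : 'I_(ne G)) : bool :=
  (((ends G e).1 == w) && ~~ (o e).1) || (((ends G e).2 == w) && ~~ (o e).2).

Definition joins (G : sgraph) (e : 'I_(ne G)) (x y : 'I_(nv G)) : bool :=
  (ends G e == (x, y)) || (ends G e == (y, x)).

Definition closed_walk (G : sgraph)
    (st : seq ('I_(nv G) * 'I_(ne G) * 'I_(nv G))) : bool :=
  [&& st != [::],
      all (fun s => joins s.1.2 s.1.1 s.2) st &
      cycle (fun a b => a.2 == b.1.1) st].

Definition is_cycle (G : sgraph) (o : ori G)
    (st : seq ('I_(nv G) * 'I_(ne G) * 'I_(nv G))) : bool :=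
  closed_walk st &&
  all (fun s => has (fun t => into_at o s.1.1 t.1.2) st &&
                has (fun t => out_at o s.1.1 t.1.2) st) st.

Definition acyclic (G : sgraph) (o : ori G) : Prop :=
  valid_ori o /\ ~ (exists st, is_cycle o st).

Definition acyclicb (G : sgraph) (o : ori G) : bool := `[< acyclic o >].

Definition is_sink (G : sgraph) (o : ori G) (v : 'I_(nv G)) : bool :=
  [forall e : 'I_(ne G),
     (((ends G e).1 == v) ==> (o e).1) && (((ends G e).2 == v) ==> (o e).2)].

Definition nsinks (G : sgraph) (o : ori G) : nat := #|[set v | is_sink o v]|.

Definition preserves (G : sgraph) (o : ori G) (k : 'I_(nv G) -> int) : bool :=
  [forall e : 'I_(ne G),
     ((o e).1 == (k (ends G e).1 > sgnz G e * k (ends G e).2)) &&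
     ((o e).2 == (k (ends G e).2 > sgnz G e * k (ends G e).1))].

(* Formal power series in the x_i (i in Z) are represented by their
   coefficient functions on monomials; the monomial prod_j x_{s_j} is
   represented by any sequence s of integers (all permutations of s give
   the same coefficient). *)
Definition Xcoef (G : sgraph) (s : seq int) : nat :=
  #|[set f : {ffun 'I_(nv G) -> seq_sub s} |
      proper (fun v => val (f v)) &&
      perm_eq [seq val (f v) | v <- enum 'I_(nv G)] s]|.

Definition Ycoef (G : sgraph) (o : ori G) (s : seq int) : nat :=
  #|[set f : {ffun 'I_(nv G) -> seq_sub s} |
      [&& proper (fun v => val (f v)), preserves o (fun v => val (f v)) &
          perm_eq [seq val (f v) | v <- enum 'I_(nv G)] s]]|.

Record sposet := SPoset { spG : sgraph; spO : ori spG }.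
Definition is_sposet (P : sposet) : Prop := acyclic (spO P).

(* a finite Q-linear combination of Y_P's, and its image under phi *)
Definition Ycomb (rep : seq (rat * sposet)) (s : seq int) : rat :=
  \sum_(p <- rep) p.1 * (Ycoef (spO p.2) s)%:R.
Definition phi_rep (rep : seq (rat * sposet)) : {poly rat} :=
  \sum_(p <- rep) p.1 *: 'X^(nsinks (spO p.2)).

Definition acyc (G : sgraph) (k : nat) : nat :=
  #|[set o : ori G | acyclicb o && (nsinks o == k)]|.

Definition all_sposets (rep : seq (rat * sposet)) : Prop :=
  foldr (fun p acc => is_sposet p.2 /\ acc) True rep.

(* Main.v *)
Require Import Defs.
From HB Require Import structures.
From mathcomp Require Import all_boot all_order all_algebra.
From mathcomp Require Import boolp zify ring.
Set Implicit Arguments. Unset Strict Implicit. Unset Printing Implicit Defensive.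
Import Order.TTheory GRing.Theory Num.Theory.
Local Open Scope ring_scope.

Section Diff.
Variable R : comNzRingType.

Fixpoint dlt (j : nat) (f : nat -> R) (i : nat) : R :=
  if j is j'.+1 then dlt j' f i.+1 - dlt j' f i else f i.

Lemma dlt_sum (I : Type) (r : seq I) (P : pred I) (c : I -> R) (F : I -> nat -> R) j i :
  dlt j (fun k => \sum_(x <- r | P x) c x * F x k) i = \sum_(x <- r | P x) c x * dlt j (F x) i.
Proof.
elim: j i => [|j IH] i /=; first by [].
by rewrite !IH -sumrB; apply: eq_bigr => x _; rewrite mulrBr.
Qed.

Lemma dlt_shift j f i : dlt j (fun k => f k.+1) i = dlt j f i.+1.
Proof. by elim: j i => //= j IH i; rewrite !IH. Qed.

Lemma dltS j f i : dlt j.+1 f i = dlt j (fun k => f k.+1 - f k) i.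
Proof.
elim: j i => [|j IH] i; first by [].
change (dlt j.+1 f i.+1 - dlt j.+1 f i = dlt j.+1 (fun k => f k.+1 - f k) i).
by rewrite !IH.
Qed.

Lemma dlt_ext j f g i : (forall k, f k = g k) -> dlt j f i = dlt j g i.
Proof. by move=> fg; have -> : f = g by apply: funext. Qed.

Lemma dlt0_up m f : (forall i, dlt m f i = 0) -> forall n i, (m <= n)%N -> dlt n f i = 0.
Proof.
move=> H n i /subnKC <-; elim: (n - m)%N i => [|p IH] i; first by rewrite addn0.
by rewrite addnS /= !IH subr0.
Qed.

Definition Ext d (f : nat -> R) := \sum_(j < d.+1) (-1)^+j * dlt j f 0%N.

Lemma Ext_sum d (I : Type) (r : seq I) (P : pred I) (c : I -> R) (F : I -> nat -> R) :
  Ext d (fun k => \sum_(x <- r | P x) c x * F x k) = \sum_(x <- r | P x) c x * Ext d (F x).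
Proof.
rewrite /Ext; under eq_bigr do rewrite dlt_sum mulr_sumr.
rewrite exchange_big; apply: eq_bigr => x _; rewrite mulr_sumr.
by apply: eq_bigr => j _; rewrite mulrCA.
Qed.

Lemma Ext_ext d f g : (forall k, f k = g k) -> Ext d f = Ext d g.
Proof. by move=> fg; have -> : f = g by apply: funext. Qed.

Lemma tele_gen (a b : nat -> R) d : (forall j, b j = a j.+1 + a j) ->
  \sum_(j < d.+1) (-1)^+j * b j = a 0%N + (-1)^+d * a d.+1.
Proof.
move=> ab; elim: d => [|d IH].
  by rewrite big_ord1 expr0 !mul1r ab addrC.
rewrite big_ord_recr IH ab.
rewrite /= exprS; ring.
Qed.

Lemma tele_aux d f :
  \sum_(j < d.+1) (-1)^+j * dlt j f 1%N = f 0%N + (-1)^+d * dlt d.+1 f 0%N.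
Proof.
apply: (@tele_gen (fun j => dlt j f 0%N) (fun j => dlt j f 1%N)) => j.
by rewrite [dlt j.+1 f 0%N]/= subrK.
Qed.

Lemma Ext_shift d f : (forall i, dlt d.+1 f i = 0) -> Ext d (fun k => f k.+1) = f 0%N.
Proof.
move=> H; rewrite /Ext; under eq_bigr do rewrite dlt_shift.
by rewrite tele_aux H mulr0 addr0.
Qed.

End Diff.

Lemma card_bij_in (T1 T2 : finType) (A : {set T1}) (B : {set T2}) (f : T1 -> T2) :
  {in A &, injective f} -> (forall x, x \in A -> f x \in B) ->
  (forall y, y \in B -> exists2 x, x \in A & f x = y) -> #|B| = #|A|.
Proof.
move=> inj fAB sur; have -> : B = f @: A.
  apply/setP => y; apply/idP/imsetP => [/sur [x xA <-]|[x xA ->]]; first by exists x.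
  exact: fAB.
exact: card_in_imset.
Qed.

Definition sg (s : bool) : int := if s then 1 else -1.
Definition okE (s o1 o2 : bool) (ca cb : int) : bool :=
  [&& ca != sg s * cb, o1 == (sg s * cb < ca) & o2 == (sg s * ca < cb)].
Definition condE (xa xb : option bool) (o1 o2 : bool) : bool :=
  (match xa with Some true => o1 | Some false => ~~ o1 | None => true end) &&
  (match xb with Some true => o2 | Some false => ~~ o2 | None => true end).
Definition cval (m : nat) (x : option bool) (c : int) : bool :=
  match x with Some true => c == m.+1%:Z | Some false => c == - (m.+1)%:Z
  | None => (- (m%:Z) <= c) && (c <= m%:Z) end.

Lemma edge_lemma s o1 o2 m ca cb xa xb :
  (if s then o1 != o2 else o1 == o2) -> cval m xa ca -> cval m xb cb ->
  okE s o1 o2 ca cb = ((xa == None) && (xb == None) ==> okE s o1 o2 ca cb) && condE xa xb o1 o2.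
Proof.
rewrite /okE /condE /cval /sg.
case: xa => [[]|]; case: xb => [[]|]; case: s; case: o1; case: o2 => //= _;
  rewrite ?mul1r ?mulN1r ?andbT //; lia.
Qed.

Definition emb k (c : 'I_(k.*2.+1)) : int := (c : nat)%:Z - (k : nat)%:Z.
Definition clsz (m : nat) (z : int) : option bool :=
  if z == (m.+1)%:Z then Some true else if z == - (m.+1)%:Z then Some false else None.
Definition cls k (c : 'I_(k.+1.*2.+1)) := clsz k (emb c).

Lemma emb_bounds k (c : 'I_(k.*2.+1)) : (- (k%:Z) <= emb c) && (emb c <= k%:Z).
Proof. rewrite /emb; have := ltn_ord c; move: (nat_of_ord c) => n; rewrite -addnn; lia. Qed.

Lemma emb_inj k : injective (@emb k).
Proof. move=> a b; rewrite /emb => h; apply: val_inj => /=; lia. Qed.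

Lemma cval_cls k (c : 'I_(k.+1.*2.+1)) : cval k (cls c) (emb c).
Proof.
rewrite /cls /clsz; have := emb_bounds c.
case: ifP => [/eqP ->|/eqP h1] //=; case: ifP => [/eqP ->|/eqP h2] //= b; lia.
Qed.

Lemma clsz_cval k x z : cval k x z -> clsz k z = x.
Proof.
rewrite /clsz; case: x => [[]|] /= h.
- by rewrite h.
- by move/eqP: h => ->; case: ifP => //; lia.
- case: ifP; first lia. by case: ifP; first lia.
Qed.

Section Graph.
Variables (G : sgraph) (o : ori G).
Local Notation V := 'I_(nv G).
Local Notation Ed := 'I_(ne G).

Definition inU (U : {set V}) (e : Ed) := ((ends G e).1 \in U) && ((ends G e).2 \in U).
Definition okU (U : {set V}) (c : V -> int) :=
  [forall e, inU U e ==> okE (sgn G e) (o e).1 (o e).2 (c (ends G e).1) (c (ends G e).2)].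
Definition Cset k (U : {set V}) :=
  [set x : {ffun V -> 'I_(k.*2.+1)} |
     [forall v, (v \notin U) ==> (emb (x v) == 0)] && okU U (fun v => emb (x v))].
Definition Nc U k := #|Cset k U|.
Definition chi k (x : {ffun V -> 'I_(k.+1.*2.+1)}) : {ffun V -> option bool} :=
  [ffun v => cls (x v)].
Definition Up (U : {set V}) (ch : {ffun V -> option bool}) := [set v in U | ch v == None].
Definition validE (U : {set V}) (ch : {ffun V -> option bool}) :=
  [forall v, (v \notin U) ==> (ch v == None)] &&
  [forall e, inU U e ==> condE (ch (ends G e).1) (ch (ends G e).2) (o e).1 (o e).2].

Definition dn k (ch : {ffun V -> option bool}) (x : {ffun V -> 'I_(k.+1.*2.+1)})
  : {ffun V -> 'I_(k.*2.+1)} :=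
  [ffun v => if ch v is None then inord (x v).-1 else inord k].
Definition up k (ch : {ffun V -> option bool}) (x : {ffun V -> 'I_(k.*2.+1)})
  : {ffun V -> 'I_(k.+1.*2.+1)} :=
  [ffun v => match ch v with Some true => inord (k.+1.*2) | Some false => inord 0
             | None => inord (x v).+1 end].

Lemma emb_up k (ch : {ffun V -> option bool}) (x : {ffun V -> 'I_(k.*2.+1)}) v :
  emb (up ch x v) = match ch v with Some true => (k.+1)%:Z | Some false => - (k.+1)%:Z
                    | None => emb (x v) end.
Proof.
rewrite /up ffunE /emb; have := ltn_ord (x v).
case: (ch v) => [[]|] h; rewrite inordK; move: (nat_of_ord (x v)) h => n h;
  rewrite -?addnn -?addnn in h *; lia.
Qed.

Lemma emb_dn k (ch : {ffun V -> option bool}) (x : {ffun V -> 'I_(k.+1.*2.+1)}) v :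
  cval k (ch v) (emb (x v)) ->
  emb (dn ch x v) = if ch v is None then emb (x v) else 0.
Proof.
rewrite /dn ffunE /emb; have := ltn_ord (x v).
move: (nat_of_ord (x v)) => n.
case: (ch v) => [b|] h /=.
  move=> _; rewrite inordK ?subrr //; rewrite -addnn; lia.
move=> hb; rewrite inordK; rewrite -?addnn in h *; lia.
Qed.


Lemma inUp U ch e : inU (Up U ch) e =
  [&& inU U e, ch (ends G e).1 == None & ch (ends G e).2 == None].
Proof.
rewrite /inU !inE.
by case: ((ends G e).1 \in U); case: ((ends G e).2 \in U);
   case: (ch (ends G e).1 == None); case: (ch (ends G e).2 == None).
Qed.

Lemma okU_dec k U (x : {ffun V -> 'I_(k.+1.*2.+1)}) (x' : {ffun V -> 'I_(k.*2.+1)})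
  (ch : {ffun V -> option bool}) :
  valid_ori o ->
  (forall v, cval k (ch v) (emb (x v))) ->
  (forall v, ch v = None -> emb (x' v) = emb (x v)) ->
  okU U (fun v => emb (x v)) = okU (Up U ch) (fun v => emb (x' v)) &&
  [forall e, inU U e ==> condE (ch (ends G e).1) (ch (ends G e).2) (o e).1 (o e).2].
Proof.
move=> vo hc hx.
have key : forall e, inU U e ->
  okE (sgn G e) (o e).1 (o e).2 (emb (x (ends G e).1)) (emb (x (ends G e).2)) =
  (inU (Up U ch) e ==> okE (sgn G e) (o e).1 (o e).2 (emb (x' (ends G e).1)) (emb (x' (ends G e).2)))
  && condE (ch (ends G e).1) (ch (ends G e).2) (o e).1 (o e).2.
  move=> e ue; rewrite (edge_lemma _ (hc _) (hc _)); last exact: (forallP vo e).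
  rewrite inUp ue /=.
  case: eqP => [ea|] ; case: eqP => [eb|] //=.
  by rewrite !hx.
apply/forallP/andP => [H|[/forallP H1 /forallP H2] e].
- split; apply/forallP => e; apply/implyP => ue.
  + have ue' : inU U e by move: ue; rewrite inUp => /andP[].
    by have := implyP (H e) ue'; rewrite key // ue /= => /andP[].
  + by have := implyP (H e) ue; rewrite key // => /andP[].
- apply/implyP => ue; rewrite key //; apply/andP; split; first exact: H1.
  exact: (implyP (H2 e) ue).
Qed.

Lemma Cset_dn k U x : valid_ori o -> x \in Cset k.+1 U ->
  validE U (chi x) && (dn (chi x) x \in Cset k (Up U (chi x))).
Proof.
move=> vo; rewrite !inE => /andP[/forallP off ok].
have hc : forall v, cval k (chi x v) (emb (x v)).
  by move=> v; rewrite ffunE; exact: cval_cls.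
have hx : forall v, chi x v = None -> emb (dn (chi x) x v) = emb (x v).
  by move=> v hv; rewrite emb_dn ?hc // hv.
rewrite (okU_dec (x' := dn (chi x) x) U vo hc hx) in ok.
case/andP: ok => ok1 ok2.
rewrite /validE ok2 ok1 !andbT.
apply/andP; split; apply/forallP => v; apply/implyP => hv.
- have /eqP e0 := implyP (off v) hv.
  rewrite /chi ffunE /cls e0 (@clsz_cval k None) //=; lia.
- rewrite emb_dn //; move: hv; rewrite inE negb_and.
  case: (chi x v) => [b|] //=; rewrite orbF => hv.
  exact: implyP (off v) hv.
Qed.

Lemma cval_up k (ch : {ffun V -> option bool}) (x' : {ffun V -> 'I_(k.*2.+1)}) v :
  cval k (ch v) (emb (up ch x' v)).
Proof.
rewrite emb_up; case: (ch v) => [[]|] //=; exact: emb_bounds.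
Qed.

Lemma up_in k U ch x' : valid_ori o -> validE U ch -> x' \in Cset k (Up U ch) ->
  [/\ up ch x' \in Cset k.+1 U, chi (up ch x') = ch & dn ch (up ch x') = x'].
Proof.
move=> vo /andP[/forallP off cnd]; rewrite inE => /andP[/forallP off' ok'].
have hc := cval_up ch x'.
have hx : forall v, ch v = None -> emb (x' v) = emb (up ch x' v).
  by move=> v hv; rewrite emb_up hv.
split.
- rewrite inE (okU_dec (x' := x') U vo hc hx) ok' cnd !andbT.
  apply/forallP => v; apply/implyP => hv.
  have /eqP hv' := implyP (off v) hv.
  rewrite -hx //; apply: (implyP (off' v)); by rewrite inE (negbTE hv).
- by apply/ffunP => v; rewrite ffunE /cls; apply: clsz_cval; exact: hc.
- apply/ffunP => v; apply: emb_inj; rewrite emb_dn //.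
  case E: (ch v) => [b|]; last by rewrite emb_up E.
  apply/esym/eqP; apply: (implyP (off' v)); by rewrite inE E andbF.
Qed.

Lemma up_dn k U x : x \in Cset k.+1 U -> up (chi x) (dn (chi x) x) = x.
Proof.
move=> _; apply/ffunP => v; apply: emb_inj; rewrite emb_up.
have := cval_cls (x v); rewrite /chi ffunE.
case E: (cls (x v)) => [[]|] /=; try by move/eqP.
move=> h; rewrite emb_dn; last by rewrite /chi ffunE E.
by rewrite /chi ffunE E.
Qed.

Lemma fiber k U ch : valid_ori o ->
  #|[set x in Cset k.+1 U | chi x == ch]| = (validE U ch * Nc (Up U ch) k)%N.
Proof.
move=> vo; case V: (validE U ch); last first.
  rewrite mul0n; apply/eqP; rewrite cards_eq0; apply/eqP/setP => x; rewrite in_set in_set0.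
  apply/negbTE/andP => [[xC /eqP E]]; have := Cset_dn vo xC.
  by rewrite E V.
rewrite mul1n /Nc; apply: (card_bij_in (f := up ch)).
- move=> a b ha hb eq.
  have [_ _ da] := up_in vo V ha; have [_ _ db] := up_in vo V hb.
  by rewrite -da -db eq.
- by move=> a ha; have [h1 h2 _] := up_in vo V ha; rewrite in_set h1 h2 eqxx.
- move=> y; rewrite in_set => /andP[yC /eqP E].
  exists (dn ch y); last by rewrite -E (up_dn yC).
  by have := Cset_dn vo yC; rewrite E => /andP[].
Qed.

End Graph.

Lemma sum_option (R : comNzRingType) (F : option bool -> R) :
  \sum_(x : option bool) F x = F None + F (Some true) + F (Some false).
Proof. by rewrite /index_enum !unlock /= !unlock /= addr0 addrA. Qed.

Section Comb.
Variables (G : sgraph) (o : ori G).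
Local Notation V := 'I_(nv G).
Local Notation Ed := 'I_(ne G).

Definition I_ (U : {set V}) := [set v in U | [forall e, inU U e ==>
   (((ends G e).1 == v) ==> (o e).1) && (((ends G e).2 == v) ==> (o e).2)]].
Definition J_ (U : {set V}) := [set v in U | [forall e, inU U e ==>
   (((ends G e).1 == v) ==> ~~ (o e).1) && (((ends G e).2 == v) ==> ~~ (o e).2)]].
Definition okv U v (x : option bool) :=
  match x with None => true | Some true => v \in I_ U | Some false => v \in J_ U end.

Lemma validE_okv U ch : validE o U ch = [forall v, okv U v (ch v)].
Proof.
apply/andP/forallP => [[/forallP off /forallP cnd] v|H].
  have vU : ch v != None -> v \in U.
    by apply: contraR => nv; apply: (implyP (off v) nv).
  case E: (ch v) => [b|] //=; have {}vU : v \in U by apply: vU; rewrite E.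
  case: b E => E; rewrite inE vU /=; apply/forallP => e; apply/implyP => ue;
    have := implyP (cnd e) ue; rewrite /condE;
    case: eqP => [ea|_]; case: eqP => [eb|_] //=; rewrite ?ea ?eb ?E /=;
    try by move/andP=> [-> ->].
    all: try by move/andP=> [-> _].
    all: try by move/andP=> [_ ->].
split; apply/forallP.
  move=> v; apply/implyP => nv; have := H v.
  by case: (ch v) => [[]|] //=; rewrite inE (negbTE nv).
move=> e; apply/implyP => ue; rewrite /condE.
have h1 := H (ends G e).1; have h2 := H (ends G e).2.
apply/andP; split.
  case: (ch (ends G e).1) h1 => [[]|] //= /[!inE] /andP[_ /forallP /(_ e)];
  by rewrite ue eqxx /= => /andP[].
case: (ch (ends G e).2) h2 => [[]|] //= /[!inE] /andP[_ /forallP /(_ e)];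
by rewrite ue eqxx /= => /andP[_].
Qed.

Lemma sum_valid (R : comNzRingType) U (F : V -> option bool -> R) :
  \sum_(ch | validE o U ch) \prod_v F v (ch v) =
  \prod_v (F v None + (v \in I_ U)%:R * F v (Some true) + (v \in J_ U)%:R * F v (Some false)).
Proof.
rewrite (eq_bigl (fun ch : {ffun V -> option bool} => [forall v, okv U v (ch v)])); last by move=> ch; rewrite validE_okv.
rewrite big_mkcond.
rewrite (eq_bigr (fun ch : {ffun V -> option bool} => \prod_v (if okv U v (ch v) then F v (ch v) else 0))); last first.
  move=> ch _; case: forallP => H.
    by apply: eq_bigr => v _; rewrite H.
  have [v nv] : exists v, ~~ okv U v (ch v).
    apply/existsP; rewrite -negb_forall; apply/negP => /forallP; exact: H.
  by rewrite (bigD1 v) //= (negbTE nv) mul0r.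
rewrite -(bigA_distr_bigA (fun v x => if okv U v x then F v x else 0)); apply: eq_bigr => v _.
rewrite sum_option /=.
by case: (v \in I_ U); case: (v \in J_ U); rewrite ?mul1r ?mul0r ?addr0.
Qed.

Lemma Nc0 U : Nc o U 0 = ~~ [exists e, inU U e].
Proof.
have emb0 : forall c : 'I_(0.*2.+1), emb c = 0 by move=> c; rewrite (ord1 c).
case: existsP => [[e ue]|ne] /=.
  apply/eqP; rewrite cards_eq0; apply/eqP/setP => x; rewrite !inE.
  apply/negbTE; apply/negP => /andP[_ /forallP /(_ e)]; rewrite ue /= /okE.
  by rewrite !emb0 mulr0 eqxx.
rewrite /Nc; have -> : Cset o 0 U = setT.
  apply/setP => x; rewrite !inE; apply/andP; split; apply/forallP => y.
    by rewrite emb0 eqxx implybT.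
  apply/implyP => uy; case: ne; by exists y.
by rewrite cardsT card_ffun !card_ord exp1n.
Qed.

Definition ch0 : {ffun V -> option bool} := [ffun _ => None].

Lemma valid_ch0 U : validE o U ch0.
Proof.
apply/andP; split; apply/forallP => x; rewrite ?ffunE //.
all: by rewrite /condE ?eqxx implybT.
Qed.

Lemma Up_ch0 U : Up U ch0 = U.
Proof. by apply/setP => v; rewrite !inE ffunE eqxx andbT. Qed.

Lemma Up_lt U ch : validE o U ch -> ch != ch0 -> (#|Up U ch| < #|U|)%N.
Proof.
move=> /andP[/forallP off _] nch; apply: proper_card; apply/properP; split.
  by apply/subsetP => v; rewrite inE => /andP[].
have [v hv] : exists v, ch v != None.
  apply/existsP; rewrite -negb_forall; apply: contra nch => /forallP H.
  by apply/eqP/ffunP => v; rewrite ffunE; apply/eqP; apply: H.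
exists v; last by rewrite inE (negbTE hv) andbF.
by apply: contraR hv => nv; apply: (implyP (off v) nv).
Qed.

Section Rg.
Variable R : comNzRingType.

Lemma decomp k U (h : {ffun V -> option bool} -> R) : valid_ori o ->
  \sum_(x in Cset o k.+1 U) h (chi x) =
  \sum_(ch | validE o U ch) h ch * (Nc o (Up U ch) k)%:R.
Proof.
move=> vo.
rewrite (partition_big (@chi _ k) xpredT) //=.
rewrite [RHS]big_mkcond; apply: eq_bigr => ch _.
rewrite (eq_bigr (fun _ => h ch)); last by move=> x /andP[_ /eqP ->].
rewrite (@sumr_const _ _ [pred x | (x \in Cset o k.+1 U) && (chi x == ch)]).
have -> : #|[pred x | (x \in Cset o k.+1 U) && (chi x == ch)]| =
          #|[set x in Cset o k.+1 U | chi x == ch]|.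
  by apply: eq_card => x; rewrite !inE.
rewrite fiber //; case: (validE o U ch); by rewrite ?mul1n ?mul0n ?mulr_natr.
Qed.

Definition Nf U k : R := (Nc o U k)%:R.

Lemma Nf_ch0 U k : Nf (Up U ch0) k = Nf U k.
Proof. by rewrite /Nf (Up_ch0 U). Qed.

Lemma Nrec U k : valid_ori o ->
  Nf U k.+1 = \sum_(ch | validE o U ch) 1 * Nf (Up U ch) k.
Proof.
move=> vo; have := decomp k U (fun _ => 1) vo.
rewrite sumr_const /Nf /Nc => <-.
by [].
Qed.

Lemma Ndiff U k : valid_ori o ->
  Nf U k.+1 - Nf U k = \sum_(ch | validE o U ch && (ch != ch0)) 1 * Nf (Up U ch) k.
Proof.
move=> vo; rewrite Nrec // (bigD1 ch0) ?valid_ch0 //= Up_ch0 mul1r.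
by rewrite addrC addrK.
Qed.

Lemma comb U :
  ([exists e, inU U e] -> exists2 v, v \in U & (v \in I_ U) != (v \in J_ U)) ->
  \sum_(ch | validE o U ch) (-1)^+#|Up U ch| = Nf U 0 :> R.
Proof.
move=> hyp.
rewrite (eq_bigr (fun ch : {ffun V -> option bool} => \prod_v (if (v \in U) && (ch v == None) then -1 else 1))); last first.
  move=> ch _; rewrite -prodr_const big_mkcond /=.
  by apply: eq_bigr => v _; rewrite inE.
rewrite (sum_valid _ (fun v x => if (v \in U) && (x == None) then -1 else 1)) /Nf Nc0.
have IU : forall v, v \in I_ U -> v \in U by move=> v; rewrite inE => /andP[].
have JU : forall v, v \in J_ U -> v \in U by move=> v; rewrite inE => /andP[].
case E: [exists e, inU U e] => /=.
  have [v vU hv] := hyp E.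
  rewrite (bigD1 v) //= vU /=.
  by move: hv; case: (v \in I_ U); case: (v \in J_ U) => //= _; ring.
apply: big1 => v _.
case vU: (v \in U) => /=.
  have -> : v \in I_ U.
    rewrite inE vU /=; apply/forallP => e; apply/implyP => ue.
    by move: E; have -> : [exists e, inU U e] by apply/existsP; exists e.
  have -> : v \in J_ U.
    rewrite inE vU /=; apply/forallP => e; apply/implyP => ue.
    by move: E; have -> : [exists e, inU U e] by apply/existsP; exists e.
  by rewrite !mulr1 /=; ring.
have -> : (v \in I_ U) = false by apply: negbTE; apply/negP => /IU; rewrite vU.
have -> : (v \in J_ U) = false by apply: negbTE; apply/negP => /JU; rewrite vU.
by rewrite !mul0r !addr0.
Qed.


Lemma recip d : valid_ori o ->
  (forall U : {set V}, [exists e, inU U e] -> exists2 v, v \in U & (v \in I_ U) != (v \in J_ U)) ->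
  forall U : {set V}, (#|U| <= d)%N ->
  (forall i, dlt (#|U|).+1 (Nf U) i = 0) /\ Ext d (Nf U) = (-1)^+#|U|.
Proof.
move=> vo hyp.
suff H : forall m (U : {set V}), (#|U| < m)%N -> (#|U| <= d)%N ->
    (forall i, dlt (#|U|).+1 (Nf U) i = 0) /\ Ext d (Nf U) = (-1)^+#|U|.
  by move=> U; apply: H (ltnSn _).
elim=> [//|m IH] U ltU leU.
have IHc : forall ch, validE o U ch && (ch != ch0) ->
    (forall i, dlt (#|Up U ch|).+1 (Nf (Up U ch)) i = 0) /\
    Ext d (Nf (Up U ch)) = (-1)^+#|Up U ch|.
  move=> ch /andP[v n]; have lt := Up_lt v n; apply: IH; lia.
have D1 : forall i, dlt (#|U|).+1 (Nf U) i = 0.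
  move=> i; rewrite dltS.
  rewrite (dlt_ext _ (g := fun k => \sum_(ch | validE o U ch && (ch != ch0)) 1 * Nf (Up U ch) k));
    last by move=> k; rewrite Ndiff.
  rewrite dlt_sum; apply: big1 => ch hch; rewrite mul1r.
  have [h _] := IHc ch hch; apply: (dlt0_up h).
  by case/andP: hch => v n; have := Up_lt v n; lia.
split=> //.
have Ds : forall i, dlt d.+1 (Nf U) i = 0 by move=> i; apply: (dlt0_up D1); lia.
have := Ext_shift Ds.
rewrite (Ext_ext _ (g := fun k => \sum_(ch | validE o U ch) 1 * Nf (Up U ch) k));
  last by move=> k; rewrite Nrec.
have E0 : Ext d (fun k => Nf (Up U ch0) k) = Ext d (Nf U).
  by apply: Ext_ext => k; rewrite Nf_ch0.
rewrite Ext_sum (bigD1 ch0) ?valid_ch0 //= E0 mul1r.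
have C := comb (hyp U); rewrite (bigD1 ch0) ?valid_ch0 //= (Up_ch0 U) in C; rewrite -C.
rewrite (eq_bigr (fun ch => (-1)^+#|Up U ch|)); last first.
  by move=> ch hch; have [_ ->] := IHc ch hch; rewrite mul1r.
by move/addIr.
Qed.

End Rg.
End Comb.

Section Walks.
Variables (G : sgraph) (o : ori G).
Local Notation V := 'I_(nv G).
Local Notation Ed := 'I_(ne G).
Local Notation T := ('I_(nv G) * 'I_(ne G) * 'I_(nv G))%type.

Definition wrel (a b : T) := a.2 == b.1.1.

Lemma cycle_insert (st : seq T) (s : T) (e : Ed) (y : V) :
  s \in st -> cycle wrel st ->
  exists i, cycle wrel ((s.1.1, e, y) :: (y, e, s.1.1) :: rot i st).
Proof.
move=> sin; case: (rot_to sin) => i p' E cyc; exists i; rewrite E.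
rewrite -(rot_cycle i) E in cyc.
move: cyc; rewrite /= !rcons_path /wrel /= !eqxx /= => /andP[-> ->].
by [].
Qed.

Lemma joins_other (e : Ed) (w : V) :
  ((ends G e).1 == w) || ((ends G e).2 == w) ->
  joins e w (if (ends G e).1 == w then (ends G e).2 else (ends G e).1).
Proof.
rewrite /joins; case: eqP => [<-|_] /= h; first by rewrite -surjective_pairing eqxx.
by move/eqP: h => <-; rewrite -surjective_pairing eqxx orbT.
Qed.

Lemma joins_sym (e : Ed) x y : joins e x y = joins e y x.
Proof. by rewrite /joins orbC. Qed.

Variable U : {set V}.
Definition allU (st : seq T) := all (fun s => inU U s.1.2) st.
Definition msr (st : seq T) := #|[set e | e \notin [seq s.1.2 | s <- st]]|.

Hypothesis Hall : forall w (f : Ed), inU U f -> ((ends G f).1 == w) || ((ends G f).2 == w) ->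
  (exists2 e, inU U e & into_at o w e) /\ (exists2 e, inU U e & out_at o w e).

Lemma joins_inc (e : Ed) x y : joins e x y -> ((ends G e).1 == x) || ((ends G e).2 == x).
Proof. by rewrite /joins => /orP[] /eqP -> /=; rewrite eqxx ?orbT. Qed.

Lemma step st : closed_walk st -> allU st -> ~~ is_cycle o st ->
  exists st', [/\ closed_walk st', allU st' & (msr st' < msr st)%N].
Proof.
move=> cw aU; rewrite /is_cycle cw /= => /allPn [s sin /nandP H].
have /andP[_ /andP[/allP jn cyc]] := cw.
have inc := joins_inc (jn s sin).
have [[ei uei hi] [eo ueo ho]] := Hall (allP aU s sin) inc.
have key : forall e, inU U e -> ((ends G e).1 == s.1.1) || ((ends G e).2 == s.1.1) ->
    e \notin [seq t.1.2 | t <- st] ->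
    exists st', [/\ closed_walk st', allU st' & (msr st' < msr st)%N].
  move=> e ue ince nin.
  set y := if (ends G e).1 == s.1.1 then (ends G e).2 else (ends G e).1.
  have [i ci] := cycle_insert e y sin cyc.
  move: ci; move: (rot i st) (mem_rot i st) => r hr ci.
  have hm : forall f, (f \in [seq t.1.2 | t <- r]) = (f \in [seq t.1.2 | t <- st]).
    by move=> f; apply/mapP/mapP => [[t tin ->]|[t tin ->]]; exists t; rewrite ?hr // -hr.
  exists ((s.1.1, e, y) :: (y, e, s.1.1) :: r); split.
  - rewrite /closed_walk ci andbT /=.
    rewrite joins_other // joins_sym joins_other //=.
    by apply/allP => t; rewrite hr; exact: jn.
  - apply/and3P; split; [exact: ue | exact: ue | apply/allP => t; rewrite hr; exact: (allP aU t)].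
  - rewrite /msr; apply: proper_card; apply/properP; split.
      apply/subsetP => f; rewrite !inE /= !negb_or => /and3P[_ _].
      by rewrite hm.
    by exists e; rewrite !inE ?nin //= eqxx.
case: H => [nhi|nho].
  apply: (key ei uei); first by move: hi; rewrite /into_at => /orP[]/andP[-> _]; rewrite ?orbT.
  apply/negP => /mapP [t tin ett]; move/hasPn: nhi => /(_ t tin); by rewrite -ett hi.
apply: (key eo ueo); first by move: ho; rewrite /out_at => /orP[]/andP[-> _]; rewrite ?orbT.
apply/negP => /mapP [t tin ett]; move/hasPn: nho => /(_ t tin); by rewrite -ett ho.
Qed.

Lemma walk_cycle st : closed_walk st -> allU st -> exists st', is_cycle o st'.
Proof.
suff: forall n st, (msr st <= n)%N -> closed_walk st -> allU st -> exists st', is_cycle o st'.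
  by move=> H; apply: (H _ st (leqnn _)).
elim=> [|n IH] st0 le cw aU; (case: (boolP (is_cycle o st0)) => [c|nc]; first by exists st0);
  have [st' [cw' aU' lt]] := step cw aU nc.
  by move: lt; rewrite leqn0 in le; rewrite (eqP le).
by apply: (IH st') => //; rewrite -ltnS; apply: leq_trans lt le.
Qed.

End Walks.

Lemma nonisol (G : sgraph) (o : ori G) : acyclic o ->
  forall U : {set 'I_(nv G)}, [exists e, inU U e] ->
  exists2 v, v \in U & (v \in I_ o U) != (v \in J_ o U).
Proof.
move=> [vo nocyc] U /existsP [e0 ue0].
case: (boolP [exists v, (v \in U) && ((v \in I_ o U) != (v \in J_ o U))]).
  by move=> /existsP [v /andP[vU h]]; exists v.
rewrite negb_exists => /forallP H; exfalso; apply: nocyc.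
have Hall : forall w (f : 'I_(ne G)), inU U f -> ((ends G f).1 == w) || ((ends G f).2 == w) ->
  (exists2 e, inU U e & into_at o w e) /\ (exists2 e, inU U e & out_at o w e).
  move=> w f uf incf.
  have wU : w \in U.
    by case/andP: uf => u1 u2; case/orP: incf => /eqP <-.
  have := H w; rewrite wU /= negbK => /eqP IJ.
  have nI : w \notin I_ o U.
    apply/negP => wI; have wJ : w \in J_ o U by rewrite -IJ.
    move: wI wJ; rewrite !inE => /andP[_ /forallP /(_ f)] + /andP[_ /forallP /(_ f)].
    rewrite uf /=; case/orP: incf => /eqP ->; rewrite eqxx /=.
      by move=> /andP[-> _] /andP[].
    by rewrite andbC => /andP[-> _]; rewrite andbC => /andP[].
  have nJ : w \notin J_ o U by rewrite -IJ.
  split.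
    move: nJ; rewrite inE wU /= negb_forall => /existsP [e]; rewrite negb_imply => /andP[ue he].
    exists e => //; move: he; rewrite /into_at.
    by case: ((ends G e).1 == w); case: ((ends G e).2 == w); case: (o e).1; case: (o e).2.
  move: nI; rewrite inE wU /= negb_forall => /existsP [e]; rewrite negb_imply => /andP[ue he].
  exists e => //; move: he; rewrite /out_at.
  by case: ((ends G e).1 == w); case: ((ends G e).2 == w); case: (o e).1; case: (o e).2.
apply: (@walk_cycle G o U Hall [:: ((ends G e0).1, e0, (ends G e0).2); ((ends G e0).2, e0, (ends G e0).1)]).
  rewrite /closed_walk /= /joins /= -!surjective_pairing !eqxx /= orbT /=.
  by [].
by apply/andP; split => //; apply/andP.
Qed.

Lemma in_out_contra (s1 s2 : bool) (kw ku ku' : int) :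
  (absz ku <= absz kw)%N -> (absz ku' <= absz kw)%N ->
  sg s1 * ku < kw -> kw <= sg s2 * ku' -> kw != sg s2 * ku' -> False.
Proof. rewrite /sg; case: s1; case: s2; rewrite ?mul1r ?mulN1r; lia. Qed.

Lemma neq_sym (s : bool) (a b : int) : (a != sg s * b) = (b != sg s * a).
Proof. rewrite /sg; case: s; rewrite ?mul1r ?mulN1r; lia. Qed.

Section Ori.
Variable G : sgraph.
Local Notation V := 'I_(nv G).
Local Notation Ed := 'I_(ne G).
Local Notation T := ('I_(nv G) * 'I_(ne G) * 'I_(nv G))%type.

Definition ori_of (k : V -> int) : ori G :=
  [ffun e => (sgnz G e * k (ends G e).2 < k (ends G e).1,
              sgnz G e * k (ends G e).1 < k (ends G e).2)].

Lemma preserves_ori_of (o : ori G) k : preserves o k = (o == ori_of k).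
Proof.
apply/forallP/eqP => [H|->].
  apply/ffunP => e; rewrite ffunE; have /andP[/eqP h1 /eqP h2] := H e.
  by rewrite -h1 -h2 -surjective_pairing.
by move=> e; rewrite ffunE !eqxx.
Qed.

Lemma walk_ends (st : seq T) t : closed_walk st -> t \in st ->
  ((ends G t.1.2).1 \in [seq s.1.1 | s <- st]) && ((ends G t.1.2).2 \in [seq s.1.1 | s <- st]).
Proof.
move=> /and3P[_ /allP jn cyc] tin.
have h1 : t.1.1 \in [seq s.1.1 | s <- st] by apply: map_f.
have h2 : t.2 \in [seq s.1.1 | s <- st].
  have := next_cycle cyc tin; rewrite /= => /eqP ->.
  by apply: map_f; rewrite mem_next.
by move: (jn t tin); rewrite /joins => /orP[] /eqP -> /=; rewrite h1 h2.
Qed.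

Lemma acyclic_ori_of k : Defs.proper k -> acyclic (ori_of k).
Proof.
move=> /forallP pr; split.
  apply/forallP => e; rewrite ffunE /=; have := pr e; rewrite /sgnz.
  by case: (sgn G e); rewrite ?mul1r ?mulN1r; lia.
move=> [st /andP[cw /allP cyc]].
have /and3P[ne _ _] := cw.
case: st ne cw cyc => [//|s0 st'] _ cw cyc.
set W := [seq s.1.1 | s <- s0 :: st'].
set P := [pred u | u \in W].
have P0 : P s0.1.1 by rewrite inE /W /= inE eqxx.
case: (arg_maxnP (fun u => absz (k u)) P0) => w wW wmax.
have [s sin ws] : exists2 s, s \in s0 :: st' & s.1.1 = w.
  by move: wW; rewrite inE => /mapP [s sin ->]; exists s.
have /andP[/hasP [ti tiin hi] /hasP [tu tuin ho]] := cyc s sin.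
rewrite ws in hi ho.
have [a1 a2] := andP (walk_ends cw tiin).
have [b1 b2] := andP (walk_ends cw tuin).
have mx : forall u, u \in W -> (absz (k u) <= absz (k w))%N by move=> u uW; apply: wmax.
have prs : forall e, k (ends G e).2 != sg (sgn G e) * k (ends G e).1.
  by move=> e; rewrite -neq_sym; exact: (pr e).
move: hi ho; rewrite /into_at /out_at !ffunE /= /sgnz -/(sg _).
case/orP => /andP[/eqP ea hin]; case/orP => /andP[/eqP eb hout].
- apply: (in_out_contra (mx _ a2) (mx _ b2) (s1 := sgn G ti.1.2) (s2 := sgn G tu.1.2)).
  + by rewrite -ea.
  + by rewrite -eb leNgt.
  + by rewrite -eb; exact: (pr tu.1.2).
- apply: (in_out_contra (mx _ a2) (mx _ b1) (s1 := sgn G ti.1.2) (s2 := sgn G tu.1.2)).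
  + by rewrite -ea.
  + by rewrite -eb leNgt.
  + by rewrite -eb; exact: prs.
- apply: (in_out_contra (mx _ a1) (mx _ b2) (s1 := sgn G ti.1.2) (s2 := sgn G tu.1.2)).
  + by rewrite -ea.
  + by rewrite -eb leNgt.
  + by rewrite -eb; exact: (pr tu.1.2).
- apply: (in_out_contra (mx _ a1) (mx _ b1) (s1 := sgn G ti.1.2) (s2 := sgn G tu.1.2)).
  + by rewrite -ea.
  + by rewrite -eb leNgt.
  + by rewrite -eb; exact: prs.
Qed.


Lemma Xsplit (s : seq int) : Xcoef G s = \sum_(o : ori G | acyclicb o) Ycoef o s.
Proof.
rewrite /Xcoef /Ycoef -sum1dep_card.
rewrite (partition_big (fun f : {ffun V -> seq_sub s} => ori_of (fun v => val (f v)))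
          (fun o : ori G => acyclicb o)); last first.
  by move=> f /andP[pr _]; apply/asboolP; exact: acyclic_ori_of.
apply: eq_bigr => o _; rewrite sum1dep_card; apply: eq_card => f; rewrite !inE.
rewrite preserves_ori_of (eq_sym o).
by case: (Defs.proper _); case: (perm_eq _ _); case: (_ == _).
Qed.

End Ori.

Definition seqT d k (t : {ffun 'I_d -> 'I_(k.+1.*2.+1)}) : seq int :=
  [seq emb (t i) | i <- enum 'I_d].
Definition cT d k (L : seq int) : nat :=
  #|[set t' : {ffun 'I_d -> 'I_(k.+1.*2.+1)} | perm_eq (seqT t') L]|.
Definition wopt (a : {poly rat}) (x : option bool) : {poly rat} :=
  match x with Some true => a - 1 | Some false => 0 | None => -1 end.
Definition wz k (z : int) : {poly rat} := wopt 'X (clsz k z).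
Definition Phi d k (F : seq int -> rat) : {poly rat} :=
  \sum_(t : {ffun 'I_d -> 'I_(k.+1.*2.+1)})
     (F (seqT t) / (cT d k (seqT t))%:R) *: \prod_(i < d) wz k (emb (t i)).

Lemma Phi_lin d k (I : Type) (r : seq I) (P : pred I) (c : I -> rat) (F : I -> seq int -> rat) :
  Phi d k (fun s => \sum_(x <- r | P x) c x * F x s) = \sum_(x <- r | P x) c x *: Phi d k (F x).
Proof.
rewrite /Phi; under eq_bigr do rewrite mulr_suml scaler_suml.
rewrite exchange_big; apply: eq_bigr => x _; rewrite scaler_sumr.
by apply: eq_bigr => t _; rewrite scalerA mulrA.
Qed.

Lemma Phi_ext d k F F' : (forall s, F s = F' s) -> Phi d k F = Phi d k F'.
Proof. by move=> h; have -> : F = F' by apply: funext. Qed.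

Definition toO k (z : int) : 'I_(k.+1.*2.+1) := inord (absz (z + (k.+1)%:Z)).

Lemma toO_emb k (c : 'I_(k.+1.*2.+1)) : toO k (emb c) = c.
Proof.
apply: val_inj; rewrite /toO /emb /= inordK; have := ltn_ord c;
  move: (nat_of_ord c) => n; rewrite -?addnn; lia.
Qed.

Lemma size_seqT d k t : size (@seqT d k t) = d.
Proof. by rewrite /seqT size_map size_enum_ord. Qed.

Section Bridge.
Variables (H : sgraph) (p : ori H) (d k : nat).
Local Notation VH := 'I_(nv H).

Definition seqX (x : {ffun VH -> 'I_(k.+1.*2.+1)}) := [seq emb (x v) | v <- enum VH].
Definition okall (x : {ffun VH -> 'I_(k.+1.*2.+1)}) :=
  Defs.proper (fun v => emb (x v)) && preserves p (fun v => emb (x v)).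

Lemma Ycoef_ord (t : {ffun 'I_d -> 'I_(k.+1.*2.+1)}) :
  Ycoef p (seqT t) = #|[set x | okall x && perm_eq (seqX x) (seqT t)]|.
Proof.
rewrite /Ycoef; set s := seqT t.
have hs : forall z, z \in s -> emb (toO k z) = z.
  by move=> z /mapP [i _ ->]; rewrite toO_emb.
apply/esym; apply: (card_bij_in (f := fun f : {ffun VH -> seq_sub s} => [ffun v => toO k (val (f v))])).
- move=> f1 f2 _ _ /ffunP E; apply/ffunP => v; apply: val_inj.
  have := E v; rewrite !ffunE => /(congr1 (@emb _)).
  by rewrite !hs ?(ssvalP (f1 v)) ?(ssvalP (f2 v)).
- move=> f; rewrite !inE => /and3P[pr pres pe].
  have E : (fun v => emb ([ffun v => toO k (val (f v))] v)) = (fun v => val (f v)).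
    by apply: funext => v; rewrite ffunE hs // (ssvalP (f v)).
  by rewrite /okall /seqX E pr pres pe.
- move=> x; rewrite inE => /andP[ok pe].
  have hv : forall v, emb (x v) \in s.
    by move=> v; rewrite -(perm_mem pe); apply: map_f; rewrite mem_enum.
  exists [ffun v => SeqSub (hv v)].
    have E : (fun v => val ([ffun v => SeqSub (hv v)] v)) = (fun v => emb (x v)).
      by apply: funext => v; rewrite ffunE.
    rewrite inE E; move: ok; rewrite /okall => /andP[-> ->] /=.
    by move: pe; rewrite /seqX.
  by apply/ffunP => v; rewrite !ffunE /= toO_emb.
Qed.


Lemma cT_perm (L1 L2 : seq int) : perm_eq L1 L2 -> cT d k L2 = cT d k L1.
Proof.
move=> pe; apply: eq_card => t'; rewrite !inE; apply/idP/idP => h.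
  by apply: perm_trans h _; rewrite perm_sym.
exact: perm_trans h pe.
Qed.

Lemma prod_perm (x : {ffun VH -> 'I_(k.+1.*2.+1)}) (t : {ffun 'I_d -> 'I_(k.+1.*2.+1)}) :
  perm_eq (seqX x) (seqT t) ->
  \prod_(i < d) wz k (emb (t i)) = \prod_v wz k (emb (x v)).
Proof.
move=> pe.
have e1 : \prod_(i < d) wz k (emb (t i)) = \prod_(z <- seqT t) wz k z.
  by rewrite /seqT big_map big_enum.
have e2 : \prod_v wz k (emb (x v)) = \prod_(z <- seqX x) wz k z.
  by rewrite /seqX big_map big_enum.
by rewrite e1 e2; apply: perm_big; rewrite perm_sym.
Qed.

Lemma cT_seqX (x : {ffun VH -> 'I_(k.+1.*2.+1)}) : (cT d k (seqX x) != 0%N) = (nv H == d).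
Proof.
case: (nv H =P d) => [ed|nd].
  rewrite -lt0n; apply/card_gt0P.
  set L := [seq x v | v <- enum VH].
  exists [ffun i : 'I_d => nth ord0 L i]; rewrite inE.
  have -> : seqT [ffun i : 'I_d => nth ord0 L i] = seqX x.
    rewrite /seqT /seqX.
    have -> : [seq emb ([ffun i : 'I_d => nth ord0 L i] i) | i <- enum 'I_d]
            = [seq emb (nth ord0 L n) | n <- [seq val i | i <- enum 'I_d]].
      by rewrite -map_comp; apply: eq_map => i; rewrite /= ffunE.
    rewrite val_enum_ord (map_comp (@emb _) (nth ord0 L)) map_nth_iota0; last first.
      by rewrite size_map size_enum_ord ed.
    rewrite take_oversize; last by rewrite size_map size_enum_ord ed.
    by rewrite -map_comp.
  exact: perm_refl.
apply/negbTE; rewrite negbK; apply/eqP; apply/eqP; rewrite cards_eq0; apply/eqP/setP => t.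
rewrite !inE; apply/negbTE/negP => /perm_size; rewrite size_seqT /seqX size_map size_enum_ord.
by move=> h; apply: nd.
Qed.

Lemma bridge : Phi d k (fun s => (Ycoef p s)%:R) =
  (nv H == d)%:R *: \sum_(x | okall x) \prod_v wz k (emb (x v)).
Proof.
rewrite /Phi; under eq_bigr do rewrite Ycoef_ord.
have cE : forall t : {ffun 'I_d -> 'I_(k.+1.*2.+1)},
    (#|[set x | okall x && perm_eq (seqX x) (seqT t)]|%:R : rat) =
    \sum_(x | okall x) (perm_eq (seqX x) (seqT t))%:R.
  move=> t; rewrite -sum1dep_card natr_sum big_mkcondr /=.
  by apply: eq_bigr => x _; case: (perm_eq _ _).
under eq_bigr do rewrite cE mulr_suml scaler_suml.
rewrite exchange_big scaler_sumr; apply: eq_bigr => x okx.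
have step : forall t : {ffun 'I_d -> 'I_(k.+1.*2.+1)},
    ((perm_eq (seqX x) (seqT t))%:R / (cT d k (seqT t))%:R) *: \prod_(i < d) wz k (emb (t i))
    = ((perm_eq (seqX x) (seqT t))%:R / (cT d k (seqX x))%:R) *: \prod_v wz k (emb (x v)).
  move=> t; case pe: (perm_eq (seqX x) (seqT t)); last by rewrite !mul0r !scale0r.
  by rewrite (cT_perm pe) (prod_perm pe).
under eq_bigr do rewrite step.
rewrite -scaler_suml -mulr_suml.
have -> : \sum_(t : {ffun 'I_d -> 'I_(k.+1.*2.+1)}) ((perm_eq (seqX x) (seqT t))%:R : rat)
          = (cT d k (seqX x))%:R.
  rewrite /cT -sum1dep_card natr_sum [RHS]big_mkcond /=.
  by apply: eq_bigr => t _; rewrite perm_sym; case: (perm_eq _ _).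
rewrite -(cT_seqX x); case: (cT d k (seqX x) =P 0%N) => [->|nz]; first by rewrite mul0r scale0r.
have nz' : (cT d k (seqX x) != 0%N) by apply/eqP.
by rewrite divff // pnatr_eq0.
Qed.

End Bridge.

Lemma Ext_sumZ d (I : Type) (r : seq I) (P : pred I) (c : I -> rat) (F : I -> nat -> {poly rat}) :
  Ext d (fun k => \sum_(x <- r | P x) c x *: F x k) = \sum_(x <- r | P x) c x *: Ext d (F x).
Proof.
rewrite (Ext_ext _ (g := fun k => \sum_(x <- r | P x) (c x)%:P * F x k)); last first.
  by move=> k; apply: eq_bigr => x _; rewrite mul_polyC.
by rewrite Ext_sum; apply: eq_bigr => x _; rewrite mul_polyC.
Qed.

Section Wpart.
Variables (H : sgraph) (p : ori H).
Local Notation VH := 'I_(nv H).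

Lemma okall_Cset k x : okall p x = (x \in Cset p k.+1 setT).
Proof.
rewrite inE /okU /okall /Defs.proper /preserves.
have -> : [forall v, (v \notin setT) ==> (emb (x v) == 0)] by apply/forallP => v; rewrite inE.
rewrite /=; apply/andP/forallP => [[/forallP h1 /forallP h2] e | h].
  rewrite /inU !inE /=; apply/and3P; split; first exact: (h1 e).
    by case/andP: (h2 e).
  by case/andP: (h2 e).
split; apply/forallP => e; have := h e; rewrite /inU !inE /= => /and3P[a b c] //.
by apply/andP; split.
Qed.

Lemma W_decomp k : valid_ori p ->
  \sum_(x : {ffun VH -> 'I_(k.+1.*2.+1)} | okall p x) \prod_v wz k (emb (x v)) =
  \sum_(ch | validE p setT ch) (\prod_v wopt 'X (ch v)) * Nf p {poly rat} (Up setT ch) k.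
Proof.
move=> vo.
rewrite (eq_bigl (fun x => x \in Cset p k.+1 setT)); last by move=> x; rewrite okall_Cset.
rewrite -(decomp k setT (fun ch => \prod_v wopt 'X (ch v)) vo).
by apply: eq_bigr => x _; apply: eq_bigr => v _; rewrite /chi ffunE.
Qed.

Lemma nsinks_I : nsinks p = #|I_ p setT|.
Proof.
rewrite /nsinks; apply: eq_card => v; rewrite !inE /is_sink /=.
by apply: eq_forallb => e; rewrite /inU !inE.
Qed.

Lemma ExtW d : acyclic p -> nv H = d ->
  Ext d (fun k => \sum_(x : {ffun VH -> 'I_(k.+1.*2.+1)} | okall p x) \prod_v wz k (emb (x v))) = 'X^(nsinks p).
Proof.
move=> ac ed; have [vo _] := ac.
rewrite (Ext_ext _ (g := fun k => \sum_(ch | validE p setT ch)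
            (\prod_v wopt 'X (ch v)) * Nf p {poly rat} (Up setT ch) k)); last first.
  by move=> k; rewrite W_decomp.
rewrite Ext_sum.
have hr := @recip _ p {poly rat} d vo (nonisol ac).
rewrite (eq_bigr (fun ch : {ffun VH -> option bool} => \prod_v (wopt 'X (ch v) *
                   (if (v \in setT) && (ch v == None) then -1 else 1)))); last first.
  move=> ch _; have le : (#|Up setT ch| <= d)%N.
    by apply: leq_trans (max_card _) _; rewrite card_ord ed.
  have [_ ->] := hr _ le.
  rewrite big_split /= -prodr_const; congr (_ * _); rewrite [LHS]big_mkcond /=.
  by apply: eq_bigr => v _; rewrite inE.
rewrite (sum_valid p setT (fun v x => wopt 'X x * (if (v \in setT) && (x == None) then -1 else 1))).
rewrite nsinks_I -prodr_const [RHS]big_mkcond /=; apply: eq_bigr => v _ /=; rewrite inE /=.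
by case: (v \in I_ p setT); case: (v \in J_ p setT) => /=; ring.
Qed.

Lemma PhiY d : acyclic p ->
  Ext d (fun k => Phi d k (fun s => (Ycoef p s)%:R)) = (nv H == d)%:R *: 'X^(nsinks p).
Proof.
move=> ac.
rewrite (Ext_ext _ (g := fun k => \sum_(u <- [:: tt]) (nv H == d)%:R *:
           \sum_(x : {ffun VH -> 'I_(k.+1.*2.+1)} | okall p x) \prod_v wz k (emb (x v)))); last first.
  by move=> k; rewrite bridge big_seq1.
rewrite Ext_sumZ big_seq1.
by case: (nv H =P d) => [ed|nd]; [rewrite ExtW | rewrite !scale0r].
Qed.

End Wpart.

Lemma sum_delta n B (v : {poly rat}) : (n < B)%N -> \sum_(d < B) (n == d)%:R *: v = v.
Proof.
move=> h; rewrite (bigD1 (Ordinal h)) //= eqxx scale1r big1 ?addr0 //.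
move=> i ne; rewrite (_ : (n == i) = false) ?scale0r //.
apply/negbTE; apply: contra ne => /eqP e; apply/eqP/val_inj; by rewrite /= e.
Qed.

Lemma split_deg (rep : seq (rat * sposet)) B (F : rat * sposet -> {poly rat}) :
  (\sum_(q <- rep) nv (spG q.2) < B)%N ->
  \sum_(q <- rep) F q = \sum_(q <- rep) \sum_(d < B) (nv (spG q.2) == d)%:R *: F q.
Proof.
elim: rep => [|q rep IH]; first by rewrite !big_nil.
rewrite !big_cons => h; rewrite sum_delta; last by apply: leq_ltn_trans h; apply: leq_addr.
by rewrite IH //; apply: leq_ltn_trans h; apply: leq_addl.
Qed.

Lemma sum_rep_eq (rep : seq (rat * sposet)) (F F' : rat * sposet -> {poly rat}) :
  all_sposets rep -> (forall q, is_sposet q.2 -> F q = F' q) ->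
  \sum_(q <- rep) F q = \sum_(q <- rep) F' q.
Proof.
elim: rep => [|q rep IH]; first by rewrite !big_nil.
by move=> [h1 h2] h; rewrite !big_cons h // IH.
Qed.

Lemma acyc_sum (G : sgraph) :
  \sum_(o : ori G | acyclicb o) ('X^(nsinks o) : {poly rat}) = \sum_(k < (nv G).+1) (acyc G k)%:R *: 'X^k.
Proof.
have hk : forall o : ori G, (nsinks o <= nv G)%N.
  by move=> o; rewrite /nsinks; apply: leq_trans (max_card _) _; rewrite card_ord.
rewrite (partition_big (fun o : ori G => (inord (nsinks o) : 'I_(nv G).+1)) xpredT) //=.
apply: eq_bigr => k _.
rewrite (eq_bigr (fun _ => 'X^k)); last first.
  by move=> o /andP[_ /eqP <-]; rewrite inordK // ltnS.
rewrite (@sumr_const _ _ [pred o : ori G | acyclicb o && (inord (nsinks o) == k)]).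
rewrite scaler_nat /acyc; congr (_ *+ _); apply: eq_card => o; rewrite !inE.
by rewrite -val_eqE /= inordK // ltnS.
Qed.

Lemma all_sposets_map (G : sgraph) (l : seq (ori G)) :
  all (fun o => acyclicb o) l -> all_sposets [seq (1 : rat, SPoset o) | o <- l].
Proof.
elim: l => [|o l IH] //= /andP[h1 h2]; split; last exact: IH.
by rewrite /is_sposet /=; apply/asboolP.
Qed.

Lemma main1 (G : sgraph) :
  exists rep : seq (rat * sposet),
      all_sposets rep /\
      (forall s : seq int, (Xcoef G s)%:R = Ycomb rep s).
Proof.
exists [seq (1 : rat, SPoset o) | o <- enum [pred o : ori G | acyclicb o]]; split.
  by apply: all_sposets_map; apply/allP => o; rewrite mem_enum.
move=> s; rewrite /Ycomb big_map big_enum /= Xsplit natr_sum.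
by apply: eq_bigr => o _; rewrite mul1r.
Qed.

Lemma main2 (G : sgraph) (rep : seq (rat * sposet)) :
  all_sposets rep ->
  (forall s : seq int, (Xcoef G s)%:R = Ycomb rep s) ->
  phi_rep rep = \sum_(k < (nv G).+1) (acyc G k)%:R *: 'X^k.
Proof.
move=> hall heq.
have key : forall d,
    \sum_(q <- rep) q.1 *: ((nv (spG q.2) == d)%:R *: 'X^(nsinks (spO q.2))) =
    \sum_(o : ori G | acyclicb o) (nv G == d)%:R *: ('X^(nsinks o) : {poly rat}).
  move=> d.
  have E1 : Ext d (fun k => Phi d k (Ycomb rep)) =
      \sum_(q <- rep) q.1 *: ((nv (spG q.2) == d)%:R *: 'X^(nsinks (spO q.2))).
    rewrite (Ext_ext _ (g := fun k => \sum_(q <- rep) q.1 *: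
               Phi d k (fun s => (Ycoef (spO q.2) s)%:R))); last first.
      by move=> k; rewrite /Ycomb Phi_lin.
    rewrite Ext_sumZ; apply: sum_rep_eq => // q hq.
    by rewrite PhiY.
  have E2 : Ext d (fun k => Phi d k (fun s => (Xcoef G s)%:R)) =
      \sum_(o : ori G | acyclicb o) (nv G == d)%:R *: ('X^(nsinks o) : {poly rat}).
    rewrite (Ext_ext _ (g := fun k => \sum_(o : ori G | acyclicb o) 1 *:
               Phi d k (fun s => (Ycoef o s)%:R))); last first.
      move=> k; rewrite -Phi_lin; apply: Phi_ext => s.
      by rewrite Xsplit natr_sum; apply: eq_bigr => o _; rewrite mul1r.
    rewrite Ext_sumZ; apply: eq_bigr => o ac.
    by rewrite scale1r PhiY //; apply/asboolP.
  by rewrite -E1 -E2; apply: Ext_ext => k; apply: Phi_ext => s; rewrite heq.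
set B := (nv G + \sum_(q <- rep) nv (spG q.2)).+1.
rewrite /phi_rep (@split_deg rep B); last by rewrite ltnS leq_addl.
rewrite exchange_big /=.
rewrite (eq_bigr (fun d : 'I_B => \sum_(o : ori G | acyclicb o) (nv G == d)%:R *: ('X^(nsinks o) : {poly rat}))); last first.
  move=> d _; rewrite -key; apply: eq_bigr => q _.
  by rewrite !scalerA mulrC.
rewrite exchange_big /= -acyc_sum; apply: eq_bigr => o _.
by rewrite sum_delta // ltnS leq_addr.
Qed.

Theorem theorem6p1 (G : sgraph) :
  (exists rep : seq (rat * sposet),
      all_sposets rep /\
      (forall s : seq int, (Xcoef G s)%:R = Ycomb rep s)) /\
  (forall rep : seq (rat * sposet),
      all_sposets rep ->
      (forall s : seq int, (Xcoef G s)%:R = Ycomb rep s) ->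
      phi_rep rep = \sum_(k < (nv G).+1) (acyc G k)%:R *: 'X^k).
Proof.
split; [exact: main1 | exact: main2].
Qed.
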